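(* Let $\alpha_1,\dots,\alpha_4$ be constants, $H=H(t,t^-,q,q^-,p,p^-)$ smooth, and $X=\xi\partial_t+\eta\partial_q+\nu\partial_p$ (coefficients functions of $(t,q,p)$) such that $\Omega=0$. Let $C$ and $P$ be as defined below. If, on the solutions of the local extremal equation $F_H=\xi\frac{\delta\tilde H}{\delta t}+\eta\frac{\delta\tilde H}{\delta q}+\nu\frac{\delta\tilde H}{\delta p}=0$, one has $(S_+-1)P=D(V)$ for some function $V(t^+,t,t^-,q^+,q,q^-,p^+,p,p^-)$, then $I=C-V$ is a differential first integral, i.e. $D(I)=0$ on the solutions of $F_H=0$.
   Context: Constant delay $\tau>0$; $t^\pm=t\pm\tau$, $f^\pm=f(t\pm\tau)$; scalar $q,p$. $S_\pm$ are the forward/backward shift operators on expressions; $\xi^\pm=S_\pm(\xi)$ etc.; $H^+=S_+(H)$. $D$ is the total derivative acting on variables at $t^-,t,t^+$. $\tilde H=p^{-}(\alpha_{1}\dot{q}+\alpha_{2}\dot{q}^{-})+p(\alpha_{3}\dot{q}+\alpha_{4}\dot{q}^{-})-H$; $\frac{\delta\tilde H}{\delta p}=\alpha_1\dot q^++(\alpha_2+\alpha_3)\dot q+\alpha_4\dot q^--\partial_p(H+H^+)$, $\frac{\delta\tilde H}{\delta q}=-\big(\alpha_4\dot p^++(\alpha_2+\alpha_3)\dot p+\alpha_1\dot p^-+\partial_q(H+H^+)\big)$, $\frac{\delta\tilde H}{\delta t}=D[\alpha_2(p\dot q-p^-\dot q^-)+\alpha_4(p^+\dot q-p\dot q^-)]+D(H)-\partial_t(H+H^+)$.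 $\Omega=\nu^{-}(\alpha_{1}\dot{q}+\alpha_{2}\dot{q}^{-})+p^{-}(\alpha_{1}D(\eta)+\alpha_{2}D(\eta^{-}))+\nu(\alpha_{3}\dot{q}+\alpha_{4}\dot{q}^{-})+p(\alpha_{3}D(\eta)+\alpha_{4}D(\eta^{-}))+(\alpha_{2}p^{-}+\alpha_{4}p)\dot{q}^{-}D(\xi-\xi^{-})-\xi H_t-\eta H_q-\nu H_p-\xi^{-}H_{t^-}-\eta^{-}H_{q^-}-\nu^{-}H_{p^-}-HD(\xi)$ (invariance condition of the Hamiltonian). $C=\eta(\alpha_{4}p^{+}+(\alpha_{2}+\alpha_{3})p+\alpha_{1}p^{-})-\xi\big(\alpha_{2}(p\dot{q}-p^{-}\dot{q}^{-})+\alpha_{4}(p^{+}\dot{q}-p\dot{q}^{-})+H\big)$, $P=(\alpha_{2}p^{-}+\alpha_{4}p)D(\eta^{-})+\nu^{-}(\alpha_{1}\dot{q}+\alpha_{2}\dot{q}^{-})-(\alpha_{2}p^{-}+\alpha_{4}p)\dot{q}^{-}D(\xi^{-})-\xi^{-}H_{t^-}-\eta^{-}H_{q^-}-\nu^{-}H_{p^-}$. Equations are considered with $t^+-t=t-t^-=\tau$. *)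

(* Defs.v *)
From HB Require Import structures.
From mathcomp Require Import all_boot all_order all_algebra.
From mathcomp Require Import all_classical all_reals all_analysis.

Import Order.TTheory GRing.Theory Num.Theory.
Import numFieldNormedType.Exports.
Local Open Scope ring_scope.

Section Delay.
Variable R : realType.

Definition vec3 (a b c : R) : 'rV[R]_3 := \row_(i < 3) nth 0 [:: a; b; c] i.
Definition vec6 (a b c d e f : R) : 'rV[R]_6 :=
  \row_(i < 6) nth 0 [:: a; b; c; d; e; f] i.
Definition vec9 (a b c d e f g h k : R) : 'rV[R]_9 :=
  \row_(i < 9) nth 0 [:: a; b; c; d; e; f; g; h; k] i.

Definition partial {n : nat} (i : 'I_n) (f : 'rV[R]_n -> R) : 'rV[R]_n -> R :=
  fun x => 'D_(delta_mx 0 i) f x.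

Fixpoint iter_partial {n : nat} (l : seq 'I_n) (f : 'rV[R]_n -> R) :=
  match l with
  | [::] => f
  | i :: l' => partial i (iter_partial l' f)
  end.

Definition smooth {n : nat} (f : 'rV[R]_n -> R) : Prop :=
  forall l : seq 'I_n, continuous (iter_partial l f) /\
    forall (i : 'I_n) (x : 'rV[R]_n), derivable (iter_partial l f) x (delta_mx 0 i).

Definition smooth1 (f : R -> R) : Prop :=
  forall (n : nat) (x : R), derivable (derive1n n f) x 1.

Section Traj.
Variables (a1 a2 a3 a4 tau : R).
Variables (H : 'rV[R]_6 -> R) (xi eta nu : 'rV[R]_3 -> R).
Variables (q p : R -> R).

Definition pt3 (s : R) : 'rV[R]_3 := vec3 s (q s) (p s).
Definition pt6 (s : R) : 'rV[R]_6 :=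
  vec6 s (s - tau) (q s) (q (s - tau)) (p s) (p (s - tau)).

Definition cmp3 (g : 'rV[R]_3 -> R) (s : R) : R := g (pt3 s).
Definition sh3 (g : 'rV[R]_3 -> R) (s : R) : R := g (pt3 (s - tau)).

Definition qd (s : R) : R := derive1 q s.
Definition pd (s : R) : R := derive1 p s.

(* partial derivatives of H, variables ordered (t, t^-, q, q^-, p, p^-),
   i.e. H_t = dlHk 0, H_{t^-} = dlHk 1, H_q = dlHk 2, H_{q^-} = dlHk 3,
   H_p = dlHk 4, H_{p^-} = dlHk 5, evaluated at the point of time s *)
Definition dlHk (k : nat) (s : R) : R := partial (inord k : 'I_6) H (pt6 s).

Definition dlOmega (t : R) : R :=
  sh3 nu t * (a1 * qd t + a2 * qd (t - tau))
  + p (t - tau) * (a1 * derive1 (cmp3 eta) t + a2 * derive1 (sh3 eta) t)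
  + cmp3 nu t * (a3 * qd t + a4 * qd (t - tau))
  + p t * (a3 * derive1 (cmp3 eta) t + a4 * derive1 (sh3 eta) t)
  + (a2 * p (t - tau) + a4 * p t) * qd (t - tau)
      * derive1 (fun s => cmp3 xi s - sh3 xi s) t
  - cmp3 xi t * dlHk 0 t - cmp3 eta t * dlHk 2 t - cmp3 nu t * dlHk 4 t
  - sh3 xi t * dlHk 1 t - sh3 eta t * dlHk 3 t - sh3 nu t * dlHk 5 t
  - H (pt6 t) * derive1 (cmp3 xi) t.

(* variational derivatives of tilde H; H^+ = H at pt6 (t + tau) *)
Definition dHt_dp (t : R) : R :=
  a1 * qd (t + tau) + (a2 + a3) * qd t + a4 * qd (t - tau)
  - (dlHk 4 t + dlHk 5 (t + tau)).

Definition dHt_dq (t : R) : R :=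
  - (a4 * pd (t + tau) + (a2 + a3) * pd t + a1 * pd (t - tau)
     + (dlHk 2 t + dlHk 3 (t + tau))).

Definition dHt_dt (t : R) : R :=
  derive1 (fun s => a2 * (p s * qd s - p (s - tau) * qd (s - tau))
                    + a4 * (p (s + tau) * qd s - p s * qd (s - tau))) t
  + derive1 (fun s => H (pt6 s)) t
  - (dlHk 0 t + dlHk 1 (t + tau)).

Definition dlFH (t : R) : R :=
  cmp3 xi t * dHt_dt t + cmp3 eta t * dHt_dq t + cmp3 nu t * dHt_dp t.

Definition dlCfun (t : R) : R :=
  cmp3 eta t * (a4 * p (t + tau) + (a2 + a3) * p t + a1 * p (t - tau))
  - cmp3 xi t * (a2 * (p t * qd t - p (t - tau) * qd (t - tau))
                 + a4 * (p (t + tau) * qd t - p t * qd (t - tau))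
                 + H (pt6 t)).

Definition dlPfun (t : R) : R :=
  (a2 * p (t - tau) + a4 * p t) * derive1 (sh3 eta) t
  + sh3 nu t * (a1 * qd t + a2 * qd (t - tau))
  - (a2 * p (t - tau) + a4 * p t) * qd (t - tau) * derive1 (sh3 xi) t
  - sh3 xi t * dlHk 1 t - sh3 eta t * dlHk 3 t - sh3 nu t * dlHk 5 t.

Definition dlVfun (V : 'rV[R]_9 -> R) (t : R) : R :=
  V (vec9 (t + tau) t (t - tau) (q (t + tau)) (q t) (q (t - tau))
          (p (t + tau)) (p t) (p (t - tau))).

End Traj.
End Delay.

Arguments smooth {R n} f.
Arguments smooth1 {R} f.
Arguments partial {R n} i f x.
Arguments iter_partial {R n} l f x.
Arguments vec3 {R}.
Arguments vec6 {R}.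
Arguments vec9 {R}.
Arguments pt3 {R}.
Arguments pt6 {R}.
Arguments cmp3 {R}.
Arguments sh3 {R}.
Arguments qd {R}.
Arguments pd {R}.
Arguments dlHk {R}.
Arguments dlOmega {R}.
Arguments dHt_dp {R}.
Arguments dHt_dq {R}.
Arguments dHt_dt {R}.
Arguments dlFH {R}.
Arguments dlCfun {R}.
Arguments dlPfun {R}.
Arguments dlVfun {R}.

(* Main.v *)
Require Import Defs.
From HB Require Import structures.
From mathcomp Require Import all_boot all_order all_algebra.
From mathcomp Require Import all_classical all_reals all_analysis.
From mathcomp Require Import ring lra.
Import Order.TTheory GRing.Theory Num.Theory.
Import numFieldNormedType.Exports.
Local Open Scope ring_scope.
Local Open Scope classical_set_scope.
Section G.
Variables (R : realType) (V W : normedModType R).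
Lemma diff_of_o (g : V -> W) x :
  (forall eps : R, 0 < eps -> \forall h \near (0 : V), `|g (h + x) - g x| <= eps * `|h|) ->
  differentiable g x.
Proof.
move=> H.
have dfc : continuous (\0 : {linear V -> W}).
  by move=> ?; apply: cst_continuous.
have E : g \o shift x = cst (g x) + (\0 : {linear V -> W}) +o_ 0 id.
  apply/eqaddoP => eps e0; have := H eps e0; apply: filterS => h /=.
  by rewrite /GRing.null_fun /= addr0.
apply/diff_locallyP; rewrite (diff_unique dfc E); split => //.
Qed.
End G.

Section S.
Variable R : realType.
Lemma derive1_shiftc (g : R -> R) c t :
  derive1 (fun s => g (s + c)) t = derive1 g (t + c).
Proof.
rewrite /derive1; set g1 := fun h => h^-1 *: _; set g2 := fun h => h^-1 *: _.
suff -> : g1 = g2 by [].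
by apply: funext => h; rewrite /g1 /g2 /= addrA.
Qed.

Lemma derivable_shiftc (g : R -> R) c t :
  derivable g (t + c) 1 -> derivable (fun s => g (s + c)) t 1.
Proof.
rewrite /derivable; set g1 := fun h => h^-1 *: _; set g2 := fun h => h^-1 *: _.
suff -> : g2 = g1 by [].
by apply: funext => h; rewrite /g1 /g2 /= addrA.
Qed.
Lemma row_norm_le n (v : 'rV[R]_n) r : 0 <= r -> (forall i, `|v 0 i| <= r) -> `|v| <= r.
Proof.
move=> r0 H; rewrite /Num.Def.normr/= mx_normrE.
apply: bigmax_le => // -[i j] _ /=.
by rewrite (ord1 i); apply: H.
Qed.

Lemma row_norm_ge n (v : 'rV[R]_n) i : `|v 0 i| <= `|v|.
Proof.
rewrite [leRHS]/Num.Def.normr/= mx_normrE.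
by apply: le_trans; last exact: (le_bigmax _ _ (0, i)).
Qed.

Lemma dir_derive n (f : 'rV[R]_n -> R) y e s :
  derivable f (y + s *: e) e ->
  is_derive s 1 (fun s => f (y + s *: e)) ('D_e f (y + s *: e)).
Proof.
move=> df.
have E : (fun h : R => h^-1 *: (((fun s => f (y + s *: e)) \o shift s) (h *: 1) - f (y + s *: e)))
   = (fun h => h^-1 *: ((f \o shift (y + s *: e)) (h *: e) - f (y + s *: e))).
  apply: funext => h /=.
  by rewrite [h *: 1]mulr1 scalerDl addrCA addrC.
by split; rewrite /derivable /derive E.
Qed.

Lemma mvt_bound (psi dpsi : R -> R) (a M : R) :
  (forall s : R, is_derive s (1 : R) psi (dpsi s)) ->
  (forall s : R, `|s| <= `|a| -> `|dpsi s| <= M) -> `|psi a - psi 0| <= M * `|a|.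
Proof.
move=> Hd HM.
have cont : forall u v : R, {within `[u, v], continuous psi}.
  move=> u v; apply: derivable_within_continuous => z _.
  by have [] := Hd z.
have [a0|a0] := leP 0 a.
  have [c cin ->] := MVT_segment a0 (fun z _ => Hd z) (cont 0 a).
  rewrite normrM subr0 ler_wpM2r //; apply: HM.
  move: cin; rewrite in_itv /= => /andP[c0 ca].
  by rewrite !ger0_norm // (le_trans c0).
have [c cin E] := MVT_segment (ltW a0) (fun z _ => Hd z) (cont a 0).
rewrite -normrN opprB E normrM sub0r normrN ler_wpM2r //; apply: HM.
move: cin; rewrite in_itv /= => /andP[ac c0].
by rewrite !ler0_norm ?lerN2 // ltW.
Qed.


Lemma is_derive_linc (c s : R) : is_derive s (1 : R) (fun z : R => z * c) c.
Proof.
have -> : (fun z : R => z * c) = (id : R -> R) * cst c by apply: funext.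
apply: is_derive_eq.
by rewrite /= scaler0 add0r /cst; apply: mulr1.
Qed.

Lemma C1_diff n (f : 'rV[R]_n -> R) x :
  (forall i y, derivable f y (delta_mx 0 i)) ->
  (forall i, continuous (fun y => 'D_(delta_mx 0 i) f y)) ->
  differentiable f x.
Proof.
move=> Hd Hc.
pose d i := 'D_(delta_mx 0 i) f x.
pose s := fun y : 'rV[R]_n => \sum_(i < n) (y 0 i - x 0 i) * d i.
have ds : differentiable s x.
  have -> : s = \sum_(i < n) (fun y : 'rV[R]_n => (y 0 i - x 0 i) * d i).
    by apply: funext => y; rewrite fct_sumE.
  apply: differentiable_sum => i.
  have -> : (fun y : 'rV[R]_n => (y 0 i - x 0 i) * d i)
      = ((fun y : 'rV[R]_n => y 0 i) - cst (x 0 i)) * cst (d i) by apply: funext.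
  apply: differentiableM; first apply: differentiableB.
  - exact: differentiable_coord.
  - exact: differentiable_cst.
  - exact: differentiable_cst.
have -> : f = (f - s) + s by rewrite subrK.
apply: differentiableD => //.
apply: diff_of_o => eps e0.
pose e' := eps / n.+1%:R.
have e'0 : 0 < e' by rewrite divr_gt0.
have Hn : forall i : 'I_n, \forall y \near x, `|'D_(delta_mx 0 i) f y - d i| <= e'.
  move=> i; have /cvgrPdist_le /(_ e' e'0) := Hc i x.
  by apply: filterS => y; rewrite distrC.
have := filter_forall (nbhs_filter x) Hn.
move/nbhs_normP => [del del0 Hdel].
apply/nbhs_normP; exists del => // h /= hdel.
rewrite sub0r normrN in hdel.
have sx : s x = 0 by rewrite /s; apply: big1 => i _; rewrite subrr mul0r.
have shx : s (h + x) = \sum_(i < n) h 0 i * d i.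
  by apply: eq_bigr => i _; rewrite mxE addrK.
have -> : (f - s) (h + x) - (f - s) x = f (h + x) - f x - \sum_(i < n) h 0 i * d i.
  have -> : (f - s) (h + x) = f (h + x) - s (h + x) by [].
  have -> : (f - s) x = f x - s x by [].
  by rewrite shx sx subr0 addrAC.
pose m (k : nat) : 'rV[R]_n := \row_(j < n) (if (j < k)%N then h 0 j else 0).
have m0 : m 0%N = 0 by apply/rowP => j; rewrite !mxE.
have mn : m n = h by apply/rowP => j; rewrite !mxE ltn_ord.
have tel : f (h + x) - f x = \sum_(k < n) (f (m k.+1 + x) - f (m k + x)).
  rewrite -(big_mkord xpredT (fun k => f (m k.+1 + x) - f (m k + x))).
  by rewrite telescope_sumr // mn m0 add0r.
rewrite tel -sumrB.
apply: le_trans (ler_norm_sum _ _ _) _.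
apply: (@le_trans _ _ (\sum_(k < n) e' * `|h|)).
  apply: ler_sum => k _.
  have mk1 : m k.+1 + x = (m k + x) + h 0 k *: delta_mx 0 k.
    apply/rowP => j; rewrite !mxE eqxx /=.
    case: (ltngtP j k) => [jk|kj|jk].
    - rewrite (ltn_trans jk (ltnSn k)).
      have -> : (j == k) = false by apply/negbTE; rewrite neq_ltn jk.
      by rewrite mulr0 addr0.
    - have -> : (j == k) = false by apply/negbTE; rewrite neq_ltn kj orbT.
      rewrite ltnS leqNgt kj /=.
      by rewrite mulr0 addr0.
    - have -> : j = k by apply: val_inj.
      by rewrite eqxx ltnSn mulr1 add0r addrC.
  rewrite mk1.
  set y := m k + x.
  pose e := delta_mx 0 k : 'rV[R]_n.
  have D1 : forall z : R, is_derive z (1 : R)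
      ((fun z : R => f (y + z *: e)) - (fun z : R => z * d k))
      ('D_e f (y + z *: e) - d k).
    move=> z; apply: is_deriveB; last exact: is_derive_linc.
    apply: dir_derive; exact: Hd.
  have D2 : forall z : R, `|z| <= `|h 0 k| -> `|'D_e f (y + z *: e) - d k| <= e'.
    move=> z hz; apply: Hdel => /=.
    have -> : x - (y + z *: e) = - (m k + z *: e).
      by rewrite /y [m k + x]addrC -addrA opprD addrA subrr add0r.
    rewrite normrN; apply: le_lt_trans hdel.
    apply: row_norm_le => // j; rewrite !mxE eqxx /=.
    case: (ltngtP j k) => [jk|kj|jk].
    - have -> : (j == k) = false by apply/negbTE; rewrite neq_ltn jk.
      by rewrite mulr0 addr0 row_norm_ge.
    - have -> : (j == k) = false by apply/negbTE; rewrite neq_ltn kj orbT.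
      by rewrite mulr0 addr0 normr0.
    - have -> : j = k by apply: val_inj.
      rewrite eqxx mulr1 add0r.
      apply: (le_trans hz); exact: row_norm_ge.
  have := mvt_bound _ _ _ _ D1 D2.
  have E : forall a : R, ((fun z : R => f (y + z *: e)) - (fun z : R => z * d k)) a
     = f (y + a *: e) - a * d k by [].
  rewrite !E scale0r addr0 mul0r subr0 => H1.
  apply: le_trans; first by rewrite addrAC; exact: H1.
  by rewrite ler_wpM2l ?(ltW e'0) // row_norm_ge.
rewrite sumr_const card_ord -mulr_natl mulrA ler_wpM2r //.
rewrite /e' mulrCA ger_pMr // ler_pdivrMr ?ltr0Sn // mul1r ler_nat //.
Qed.


Lemma derivable_rowF n (F : 'I_n -> R -> R) t :
  (forall j, derivable (F j) t 1) -> derivable (fun s => \row_j F j s) t 1.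
Proof.
move=> dF; apply/derivable_mxP => i j.
have -> : (fun x => (\row_j F j x) i j) = F j by apply: funext => x; rewrite mxE.
exact: dF.
Qed.

Lemma derivable_vec3 (a b c : R -> R) t :
  derivable a t 1 -> derivable b t 1 -> derivable c t 1 ->
  derivable (fun s => vec3 (a s) (b s) (c s)) t 1.
Proof.
move=> da db dc; apply: (@derivable_rowF 3 (fun j s => nth 0 [:: a s; b s; c s] j) t).
case=> [[|[|[|k]]] kl].
- exact: da.
- exact: db.
- exact: dc.
- by exfalso; move: kl; rewrite !ltnS ltn0.
Qed.

Lemma derivable_vec6 (a b c d e f : R -> R) t :
  derivable a t 1 -> derivable b t 1 -> derivable c t 1 ->
  derivable d t 1 -> derivable e t 1 -> derivable f t 1 ->
  derivable (fun s => vec6 (a s) (b s) (c s) (d s) (e s) (f s)) t 1.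
Proof.
move=> da db dc dd de df.
apply: (@derivable_rowF 6 (fun j s => nth 0 [:: a s; b s; c s; d s; e s; f s] j) t).
case=> [[|[|[|[|[|[|k]]]]]] kl].
- exact: da.
- exact: db.
- exact: dc.
- exact: dd.
- exact: de.
- exact: df.
- by exfalso; move: kl; rewrite !ltnS ltn0.
Qed.

Lemma smooth_diff n (f : 'rV[R]_n -> R) x : smooth f -> differentiable f x.
Proof.
move=> sf; apply: C1_diff.
- by move=> i y; have [_ ] := sf [::]; apply.
- by move=> i; have [] := sf [:: i].
Qed.

Lemma smooth_comp n (f : 'rV[R]_n -> R) (g : R -> 'rV[R]_n) t :
  smooth f -> derivable g t 1 -> derivable (fun s => f (g s)) t 1.
Proof.
move=> sf /derivable1_diffP dg; apply/derivable1_diffP.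
apply: differentiable_comp => //.
exact: smooth_diff.
Qed.


Lemma dD (f g : R -> R) t : derivable f t 1 -> derivable g t 1 ->
  derivable (fun s => f s + g s) t 1.
Proof. exact: derivableD. Qed.
Lemma dB (f g : R -> R) t : derivable f t 1 -> derivable g t 1 ->
  derivable (fun s => f s - g s) t 1.
Proof. exact: derivableB. Qed.
Lemma dM (f g : R -> R) t : derivable f t 1 -> derivable g t 1 ->
  derivable (fun s => f s * g s) t 1.
Proof. exact: derivableM. Qed.
Lemma dMc (c : R) (f : R -> R) t : derivable f t 1 ->
  derivable (fun s => c * f s) t 1.
Proof. by move=> df; apply: dM => //; exact: derivable_cst. Qed.
Lemma d1D (f g : R -> R) t : derivable f t 1 -> derivable g t 1 ->
  derive1 (fun s => f s + g s) t = derive1 f t + derive1 g t.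
Proof. by move=> df dg; rewrite !derive1E; exact: deriveD. Qed.
Lemma d1B (f g : R -> R) t : derivable f t 1 -> derivable g t 1 ->
  derive1 (fun s => f s - g s) t = derive1 f t - derive1 g t.
Proof. by move=> df dg; rewrite !derive1E; exact: deriveB. Qed.
Lemma d1M (f g : R -> R) t : derivable f t 1 -> derivable g t 1 ->
  derive1 (fun s => f s * g s) t = derive1 f t * g t + f t * derive1 g t.
Proof.
move=> df dg; rewrite !derive1E; rewrite (deriveM df dg).
by rewrite /GRing.scale /= mulrC addrC [g t * _]mulrC.
Qed.
Lemma d1Mc (c : R) (f : R -> R) t : derivable f t 1 ->
  derive1 (fun s => c * f s) t = c * derive1 f t.
Proof. by move=> df; rewrite derive1Ml. Qed.
End S.
Arguments smooth_comp {R n f g t}.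
Arguments derivable_shiftc {R g c t}.
Lemma lin2 (R : realType) (x y z : R) : y = 0 -> z = 0 -> x = y - z -> x = 0.
Proof. by move=> -> -> ->; rewrite subrr. Qed.
Arguments lin2 {R x y z}.
Arguments dD {R f g t}.
Arguments dB {R f g t}.
Arguments dM {R f g t}.
Arguments dMc {R c f t}.
Arguments d1D {R f g t}.
Arguments d1B {R f g t}.
Arguments d1M {R f g t}.
Arguments d1Mc {R c f t}.

Local Close Scope classical_set_scope.

Theorem proposition1 (R : realType) (a1 a2 a3 a4 tau : R)
  (H : 'rV[R]_6 -> R) (xi eta nu : 'rV[R]_3 -> R) (V : 'rV[R]_9 -> R) :
  0 < tau ->
  smooth H -> smooth xi -> smooth eta -> smooth nu ->
  (* dlOmega = 0 (identically, i.e. along every smooth trajectory) *)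
  (forall q p : R -> R, smooth1 q -> smooth1 p ->
     forall t : R, dlOmega a1 a2 a3 a4 tau H xi eta nu q p t = 0) ->
  (* (S_+ - 1) P = D(V) on the solutions of F_H = 0 *)
  (forall q p : R -> R, smooth1 q -> smooth1 p ->
     (forall t : R, dlFH a1 a2 a3 a4 tau H xi eta nu q p t = 0) ->
     forall t : R, is_derive t (1 : R) (dlVfun tau q p V)
       (dlPfun a1 a2 a4 tau H xi eta nu q p (t + tau)
        - dlPfun a1 a2 a4 tau H xi eta nu q p t)) ->
  (* then D(C - V) = 0 on the solutions of F_H = 0 *)
  forall q p : R -> R, smooth1 q -> smooth1 p ->
    (forall t : R, dlFH a1 a2 a3 a4 tau H xi eta nu q p t = 0) ->
    forall t : R, is_derive t (1 : R)
      (fun s => dlCfun a1 a2 a3 a4 tau H xi eta q p s - dlVfun tau q p V s) 0.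
Proof.
move=> tau0 sH sxi seta snu HOm HV q p sq sp HF t.
have dq : forall s, derivable q s 1 := fun s => sq 0%N s.
have dp : forall s, derivable p s 1 := fun s => sp 0%N s.
have dqd : forall s, derivable (qd q) s 1 := fun s => sq 1%N s.
have dpt3 : forall s, derivable (pt3 q p) s 1.
  move=> s; rewrite /pt3; apply: derivable_vec3 => //; exact: derivable_id.
have dcmp : forall g, smooth g -> forall s, derivable (cmp3 q p g) s 1.
  move=> g sg s; exact: (smooth_comp sg (dpt3 s)).
have dsh : forall g, smooth g -> forall s, derivable (sh3 tau q p g) s 1.
  move=> g sg s; exact: (derivable_shiftc (dcmp g sg (s - tau))).
have dpm : forall s, derivable (fun z => p (z - tau)) s 1.
  move=> s; exact: (derivable_shiftc (dp (s - tau))).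
have dpp : forall s, derivable (fun z => p (z + tau)) s 1.
  move=> s; exact: (derivable_shiftc (dp (s + tau))).
have dqm : forall s, derivable (fun z => q (z - tau)) s 1.
  move=> s; exact: (derivable_shiftc (dq (s - tau))).
have dqdm : forall s, derivable (fun z => qd q (z - tau)) s 1.
  move=> s; exact: (derivable_shiftc (dqd (s - tau))).
have dtm : forall s, derivable (fun z : R => z - tau) s 1.
  move=> s; apply: (@derivable_shiftc R id (- tau) s); exact: derivable_id.
have dHp : derivable (fun s => H (pt6 tau q p s)) t 1.
  apply: (smooth_comp sH).
  rewrite /pt6; apply: derivable_vec6 => //; exact: derivable_id.
pose K := fun s => a2 * (p s * qd q s - p (s - tau) * qd q (s - tau))
                  + a4 * (p (s + tau) * qd q s - p s * qd q (s - tau)).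
have dK : derivable K t 1 :=
  dD (dMc (dB (dM (dp t) (dqd t)) (dM (dpm t) (dqdm t))))
     (dMc (dB (dM (dpp t) (dqd t)) (dM (dp t) (dqdm t)))).
pose A := fun s => a4 * p (s + tau) + (a2 + a3) * p s + a1 * p (s - tau).
have dA1 : derivable (fun s => a4 * p (s + tau)) t 1 := dMc (dpp t).
have dA2 : derivable (fun s => (a2 + a3) * p s) t 1 := dMc (dp t).
have dA3 : derivable (fun s => a1 * p (s - tau)) t 1 := dMc (dpm t).
have dA12 : derivable (fun s => a4 * p (s + tau) + (a2 + a3) * p s) t 1 := dD dA1 dA2.
have dA : derivable A t 1 := dD dA12 dA3.
have eA : derive1 A t = a4 * derive1 p (t + tau) + (a2 + a3) * derive1 p t
                        + a1 * derive1 p (t - tau).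
  rewrite /A (d1D dA12 dA3) (d1D dA1 dA2) (d1Mc (dpp t)) (d1Mc (dp t)) (d1Mc (dpm t)).
  by rewrite !derive1_shiftc.
have dE := dcmp eta seta t.
have dX := dcmp xi sxi t.
have dEA : derivable (fun s => cmp3 q p eta s * A s) t 1 := dM dE dA.
have dKH : derivable (fun s => K s + H (pt6 tau q p s)) t 1 := dD dK dHp.
have dXKH : derivable (fun s => cmp3 q p xi s * (K s + H (pt6 tau q p s))) t 1 := dM dX dKH.
have dC : derivable (dlCfun a1 a2 a3 a4 tau H xi eta q p) t 1 := dB dEA dXKH.
have eC : derive1 (dlCfun a1 a2 a3 a4 tau H xi eta q p) t =
   (derive1 (cmp3 q p eta) t * A t + cmp3 q p eta t * derive1 A t)
   - (derive1 (cmp3 q p xi) t * (K t + H (pt6 tau q p t))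
      + cmp3 q p xi t * (derive1 K t + derive1 (fun s => H (pt6 tau q p s)) t)).
  by rewrite (d1B dEA dXKH) (d1M dE dA) (d1M dX dKH) (d1D dK dHp).
have dCd : is_derive t (1 : R) (dlCfun a1 a2 a3 a4 tau H xi eta q p)
   (derive1 (dlCfun a1 a2 a3 a4 tau H xi eta q p) t).
  by rewrite derive1E; apply: derivableP.
have HVt := HV q p sq sp HF t.
apply: (is_derive_eq (is_deriveB dCd HVt)).
have sh3E : forall g, sh3 tau q p g (t + tau) = cmp3 q p g t.
  by move=> g; rewrite /sh3 /cmp3 addrK.
have dshE : forall g, derive1 (sh3 tau q p g) (t + tau) = derive1 (cmp3 q p g) t.
  move=> g; have := @derive1_shiftc R (cmp3 q p g) (- tau) (t + tau).
  by rewrite addrK.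
have h1 := HOm q p sq sp t.
rewrite /dlOmega (d1B dX (dsh xi sxi t)) in h1.
have h2 := HF t.
rewrite /dlFH /dHt_dt /dHt_dq /dHt_dp /pd in h2.
pose Hp := fun s => H (pt6 tau q p s).
have dKE : derive1 (fun s => a2 * (p s * qd q s - p (s - tau) * qd q (s - tau))
                  + a4 * (p (s + tau) * qd q s - p s * qd q (s - tau))) t = derive1 K t by [].
have dHE : derive1 (fun s => H (pt6 tau q p s)) t = derive1 Hp t by [].
rewrite dKE dHE in h2.
have KtE : K t = a2 * (p t * qd q t - p (t - tau) * qd q (t - tau))
                  + a4 * (p (t + tau) * qd q t - p t * qd q (t - tau)) by [].
have AtE : A t = a4 * p (t + tau) + (a2 + a3) * p t + a1 * p (t - tau) by [].
rewrite eC eA /dlPfun !addrK !sh3E !dshE KtE AtE dHE.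
apply: (lin2 h1 h2).
move: (derive1 (cmp3 q p eta) t) (derive1 (cmp3 q p xi) t) (derive1 (sh3 tau q p eta) t)
  (derive1 (sh3 tau q p xi) t) (derive1 p (t + tau)) (derive1 p t) (derive1 p (t - tau))
  (derive1 K t) (derive1 Hp t) => D1 D2 D3 D4 D5 D6 D7 D8 D9.
move: (H (pt6 tau q p t)) (cmp3 q p eta t) (cmp3 q p xi t) (cmp3 q p nu t)
  (sh3 tau q p eta t) (sh3 tau q p xi t) (sh3 tau q p nu t) => h0 c1 c2 c3 s1 s2 s3.
move: (dlHk tau H q p 0 t) (dlHk tau H q p 1 t) (dlHk tau H q p 2 t) (dlHk tau H q p 3 t)
  (dlHk tau H q p 4 t) (dlHk tau H q p 5 t) (dlHk tau H q p 1 (t + tau))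
  (dlHk tau H q p 3 (t + tau)) (dlHk tau H q p 5 (t + tau)) => k0 k1 k2 k3 k4 k5 k6 k7 k8.
move: (p t) (p (t + tau)) (p (t - tau)) (qd q t) (qd q (t + tau)) (qd q (t - tau))
  => p0 p1 p2 q0 q1 q2.
ring.
Qed.
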